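(* Let $n\ge1$ and let $\mathcal{C}$ be the binary $[2^n-1,n]$ simplex code. Then for every integer $s$ with $1\le s\le n-\ln n$, $\mathcal{C}$ is a functional $(s,\,2^{n-1}-\lceil s/2\rceil\cdot2^{s-1})$-batch code. Moreover, $\mathcal{C}$ can serve every multiset of request vectors $\{\mathbf{v}_1^{(a_1)},\dots,\mathbf{v}_s^{(a_s)}\}$ with $a_i\ge1$, $\sum_{i=1}^s a_i=t$, $\dim\operatorname{Span}\{\mathbf{v}_1,\dots,\mathbf{v}_s\}=s'$ and $t\le 2^{n-1}-\lceil s/2\rceil\cdot2^{s'-1}$ (in the sense that the required $t$ pairwise disjoint recovering sets exist).
   Context: The binary $[2^n-1,n]$ simplex code is the binary linear code whose $n\times(2^n-1)$ generator matrix $\mathbf{G}=[\mathbf{g}_1,\dots,\mathbf{g}_{2^n-1}]$ has as columns all nonzero vectors of $\mathbb{F}_2^n$ (each exactly once). A binary linear code with generator matrix $\mathbf{G}=[\mathbf{g}_1,\dots,\mathbf{g}_N]\in\mathbb{F}_2^{n\times N}$ with nonzero columns is a functional $(s,t)$-batch code ($1\le s\le t$) if for every multiset of request vectors $I=\{\mathbf{v}_1^{(a_1)},\dots,\mathbf{v}_s^{(a_s)}\}$, i.e. nonzero vectors $\mathbf{v}_1,\dots,\mathbf{v}_s\in\mathbb{F}_2^n$ (not necessarily distinct) with multiplicities $a_i\ge1$ and $\sum_i a_i=t$, there exist $t$ pairwise disjoint sets $R_{i,j}\subseteq[N]$ ($i\in[s]$, $j\in[a_i]$) with $\sum_{l\in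 R_{i,j}}\mathbf{g}_l=\mathbf{v}_i$ for all $i,j$. Here $\ln$ is the natural logarithm. *)

(* Defs.v *)
From Stdlib Require Reals.
From HB Require Import structures.
From mathcomp Require Import all_boot all_order all_algebra.

Set Implicit Arguments.
Unset Strict Implicit.
Unset Printing Implicit Defensive.

Import GRing.Theory.

Definition simplex_generator (n N : nat) (G : 'M['F_2]_(n, N)) : Prop :=
  [/\ forall j : 'I_N, col j G != 0%R,
      injective (fun j : 'I_N => col j G)
    & forall v : 'cV['F_2]_n, v != 0%R -> exists j : 'I_N, col j G = v].

Definition serves (n N s : nat) (G : 'M['F_2]_(n, N))
    (v : 'I_s -> 'cV['F_2]_n) (a : 'I_s -> nat) : Prop :=
  exists R : 'I_s -> nat -> {set 'I_N},
    (forall (i i' : 'I_s) (j j' : nat), j < a i -> j' < a i' ->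
        (i, j) != (i', j') -> [disjoint R i j & R i' j']) /\
    (forall (i : 'I_s) (j : nat), j < a i ->
        (\sum_(l in R i j) col l G)%R = v i).

Definition functional_batch (n N : nat) (G : 'M['F_2]_(n, N)) (s t : nat) : Prop :=
  forall (v : 'I_s -> 'cV['F_2]_n) (a : 'I_s -> nat),
    (forall i, v i != 0%R) -> (forall i, 0 < a i) -> \sum_(i < s) a i = t ->
    serves G v a.

Definition span_dim (n s : nat) (v : 'I_s -> 'cV['F_2]_n) : nat :=
  \rank (\matrix_(i < s, k < n) v i k ord0)%R.

Definition le_n_minus_ln_n (s n : nat) : Prop :=
  Reals.Rdefinitions.Rle (Reals.Raxioms.INR s)
    (Reals.Rdefinitions.Rminus (Reals.Raxioms.INR n) (Reals.Rpower.ln (Reals.Raxioms.INR n))).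

(* Main.v *)
Require Import Defs.
From HB Require Import structures.
From mathcomp Require Import all_boot all_order all_algebra.
From mathcomp Require Import zify.
Set Implicit Arguments. Unset Strict Implicit. Unset Printing Implicit Defensive.
Import GRing.Theory.
Local Open Scope ring_scope.

Lemma c2 n m (x : 'M['F_2]_(n,m)) : x + x = 0.
Proof. apply/matrixP => i j; rewrite !mxE. by case: (x i j) => [[|[|k]]] //= ?; apply/val_inj. Qed.

Lemma addKc n m (x e : 'M['F_2]_(n,m)) : x + e + e = x.
Proof. by rewrite -addrA c2 addr0. Qed.

Lemma disjP (T : finType) (A B : {set T}) :
  (forall x, x \in A -> x \notin B) -> [disjoint A & B].
Proof. move=> H; rewrite disjoints_subset; apply/subsetP => x /H; by rewrite inE. Qed.

Definition closedby n (F : {set 'cV['F_2]_n}) (e : 'cV['F_2]_n) :=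
  forall y, y \in F -> y + e \in F.

Lemma closedD n (F A : {set 'cV['F_2]_n}) e :
  closedby F e -> closedby A e -> closedby (F :\: A) e.
Proof.
move=> hF hA y; rewrite !inE => /andP [nyA yF]; rewrite hF // andbT.
apply/negP => /hA; by rewrite addKc (negbTE nyA).
Qed.

Lemma closedU n (F A : {set 'cV['F_2]_n}) e :
  closedby F e -> closedby A e -> closedby (F :|: A) e.
Proof. move=> hF hA y; rewrite !inE => /orP [/hF ->|/hA ->] //; by rewrite orbT. Qed.

Lemma sum_pair n (y e : 'cV['F_2]_n) : e != 0 ->
  \sum_(x in [set y; y + e]) x = e.
Proof.
move=> e0; rewrite big_setU1 ?big_set1; last first.
  rewrite inE; apply/negP => /eqP h.
  by move: e0; rewrite -(addrI y (etrans (addr0 y) h)) eqxx.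
rewrite /=. by rewrite addrA c2 add0r.
Qed.

Lemma card4 (T : finType) (a b c d : T) : (#|[set a; b; c; d]| <= 4)%N.
Proof. rewrite !cardsU !cards1; lia. Qed.


Lemma block_closed n (y e f : 'cV['F_2]_n) :
  closedby [set y; y + e; y + f; y + f + e] e /\ closedby [set y; y + e; y + f; y + f + e] f.
Proof.
split=> x; rewrite !inE => H;
repeat (case/orP: H => H); move/eqP: H => ->;
rewrite ?addKc ?(addrAC y e f) ?(addrAC (y + f) e f) ?addKc eqxx ?orbT //.
Qed.

Lemma block_sub n (A : {set 'cV['F_2]_n}) y e f :
  closedby A e -> closedby A f -> y \in A -> [set y; y + e; y + f; y + f + e] \subset A.
Proof.
move=> he hf yA; apply/subsetP => x; rewrite !inE => H;
repeat (case/orP: H => H); move/eqP: H => ->; auto.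
Qed.


Lemma neq_add n (y e : 'cV['F_2]_n) : e != 0 -> y != y + e.
Proof. move=> e0; apply/negP => /eqP h. by move: e0; rewrite -(addrI y (etrans (addr0 y) h)) eqxx. Qed.

Lemma disj_cases (T : finType) (S1 S2 Y : {set T}) (R : nat -> {set T}) N j j' :
  [disjoint S1 & S2] -> S1 \subset Y -> S2 \subset Y ->
  (forall k, (k < N)%N -> [disjoint R k & Y]) ->
  (forall k k', (k < N)%N -> (k' < N)%N -> k != k' -> [disjoint R k & R k']) ->
  (j < N.+2)%N -> (j' < N.+2)%N -> j != j' ->
  [disjoint (if j == N then S1 else if j == N.+1 then S2 else R j) &
            (if j' == N then S1 else if j' == N.+1 then S2 else R j')].
Proof.
move=> d12 s1 s2 dRY dR hj hj' jj.
have dRS1 : forall k, (k < N)%N -> [disjoint R k & S1].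
  move=> k hk; exact: disjointWr s1 (dRY k hk).
have dRS2 : forall k, (k < N)%N -> [disjoint R k & S2].
  move=> k hk; exact: disjointWr s2 (dRY k hk).
case: (eqVneq j N) => [Ej|Nj]; case: (eqVneq j' N) => [Ej'|Nj'].
- by move: jj; rewrite Ej Ej' eqxx.
- case: (eqVneq j' N.+1) => [Ej2|Nj2]; first exact: d12.
  rewrite disjoint_sym; apply: dRS1; lia.
- case: (eqVneq j N.+1) => [Ej2|Nj2]; first by rewrite disjoint_sym.
  apply: dRS1; lia.
- case: (eqVneq j N.+1) => [Ej2|Nj2]; case: (eqVneq j' N.+1) => [Ej2'|Nj2'].
  + by move: jj; rewrite Ej2 Ej2' eqxx.
  + rewrite disjoint_sym; apply: dRS2; lia.
  + apply: dRS2; lia.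
  + apply: dR => //; lia.
Qed.

Lemma serve_even n (m : nat) : forall (A : {set 'cV['F_2]_n}) (e f : 'cV['F_2]_n),
  e != 0 -> f != 0 -> e != f -> closedby A e -> closedby A f -> (4 * m <= #|A|)%N ->
  exists (D : {set 'cV['F_2]_n}) (R : nat -> {set 'cV['F_2]_n}),
   [/\ D \subset A, closedby D e, closedby D f, (#|D| <= 4 * m)%N &
    (forall j, (j < 2 * m)%N -> R j \subset D /\ \sum_(x in R j) x = e) /\
    (forall j j', (j < 2 * m)%N -> (j' < 2 * m)%N -> j != j' -> [disjoint R j & R j'])].
Proof.
elim: m => [|m IH] A e f e0 f0 ef hAe hAf hA.
  exists set0, (fun _ => set0); split.
  - by rewrite sub0set.
  - by move=> ?; rewrite inE.
  - by move=> ?; rewrite inE.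
  - by rewrite cards0.
  - by split.
have : (0 < #|A|)%N by lia.
case/card_gt0P => y yA.
set Y := [set y; y + e; y + f; y + f + e].
have [hYe hYf] := block_closed y e f.
have YA := block_sub hAe hAf yA.
have c4 : (#|Y| <= 4)%N := card4 _ _ _ _.
have hA' : (4 * m <= #|A :\: Y|)%N.
  rewrite cardsD; have -> : A :&: Y = Y by apply/setIidPr. 
  lia.
have [D [R [DA hDe hDf cD [hR hRd]]]] :=
  IH (A :\: Y) e f e0 f0 ef (closedD hAe hYe) (closedD hAf hYf) hA'.
have P1 : [set y; y + e] \subset Y by apply/subsetP => x; rewrite !inE => /orP [] ->; rewrite ?orbT.
have P2 : [set y + f; y + f + e] \subset Y by apply/subsetP => x; rewrite !inE => /orP [] ->; rewrite ?orbT.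
have DY : [disjoint D & Y].
  apply: disjP => x /(subsetP DA); by rewrite inE => /andP [].
have P12 : [disjoint [set y; y + e] & [set y + f; y + f + e]].
  apply: disjP => x; rewrite !inE => /orP [] /eqP ->; apply/negP => /orP [] /eqP h.
  - by move: f0; rewrite -(addrI y (etrans (addr0 y) h)) eqxx.
  - move: h; rewrite -addrA => /(etrans (addr0 y)) /addrI h.
    have hfe : f = e by rewrite -(addKc f e) -h add0r.
    by move: ef; rewrite hfe eqxx.
  - move/addrI: h => h.
    by move: ef; rewrite h eqxx.
  - move: h; rewrite -addrA (addrC f e) addrA => /(etrans (addr0 (y + e))) /addrI h.
    by move: f0; rewrite -h eqxx.
pose R' j := if j == 2 * m then [set y; y + e] else if j == (2 * m).+1 then [set y + f; y + f + e] else R j.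
exists (Y :|: D), R'; split.
- by rewrite subUset YA (subset_trans DA) // subsetDl.
- exact: closedU.
- exact: closedU.
- rewrite cardsU; move: c4 cD; clear; move: #|_| #|_| #|_| => p q r; lia.
split.
- move=> j hj; rewrite /R'.
  case: eqP => [_|n1]; first by split; [rewrite (subset_trans P1) ?subsetUl | exact: sum_pair].
  case: eqP => [_|n2]; first by split; [rewrite (subset_trans P2) ?subsetUl | exact: sum_pair].
  have [h1 h2] : R j \subset D /\ \sum_(x in R j) x = e by apply: hR; move: hj n1 n2; clear; lia.
  split=> //; by rewrite (subset_trans h1) ?subsetUr.
- move=> j j' hj hj' jj; apply: (disj_cases (Y := Y)) => //; try (move: hj hj'; clear; lia).
  move=> k hk; have [h1 _] := hR k hk; exact: disjointWl h1 DY.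
Qed.


Lemma disj_cases1 (T : finType) (S1 Y : {set T}) (R : nat -> {set T}) N j j' :
  S1 \subset Y ->
  (forall k, (k < N)%N -> [disjoint R k & Y]) ->
  (forall k k', (k < N)%N -> (k' < N)%N -> k != k' -> [disjoint R k & R k']) ->
  (j < N.+1)%N -> (j' < N.+1)%N -> j != j' ->
  [disjoint (if j == N then S1 else R j) & (if j' == N then S1 else R j')].
Proof.
move=> s1 dRY dR hj hj' jj.
have dRS1 : forall k, (k < N)%N -> [disjoint R k & S1].
  move=> k hk; exact: disjointWr s1 (dRY k hk).
case: (eqVneq j N) => [Ej|Nj]; case: (eqVneq j' N) => [Ej'|Nj'].
- by move: jj; rewrite Ej Ej' eqxx.
- rewrite disjoint_sym; apply: dRS1; lia.
- apply: dRS1; lia.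
- apply: dR => //; lia.
Qed.

Lemma serve_pairs n (c : nat) : forall (A : {set 'cV['F_2]_n}) (e : 'cV['F_2]_n),
  e != 0 -> closedby A e -> (2 * c <= #|A|)%N ->
  exists (D : {set 'cV['F_2]_n}) (R : nat -> {set 'cV['F_2]_n}),
   [/\ D \subset A, closedby D e, (#|D| <= 2 * c)%N,
    (forall j, (j < c)%N -> R j \subset D /\ \sum_(x in R j) x = e) &
    (forall j j', (j < c)%N -> (j' < c)%N -> j != j' -> [disjoint R j & R j'])].
Proof.
elim: c => [|c IH] A e e0 hAe hA.
  exists set0, (fun _ => set0); split.
  - by rewrite sub0set.
  - by move=> ?; rewrite inE.
  - by rewrite cards0.
  - by [].
  - by [].
have : (0 < #|A|)%N by move: hA; clear; lia.
case/card_gt0P => y yA.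
set Y := [set y; y + e].
have hYe : closedby Y e.
  move=> x; rewrite !inE => /orP [] /eqP ->; by rewrite ?addKc eqxx ?orbT.
have YA : Y \subset A.
  apply/subsetP => x; rewrite !inE => /orP [] /eqP ->; auto.
have c2' : (#|Y| <= 2)%N by rewrite cards2; case: (_ != _).
have hA' : (2 * c <= #|A :\: Y|)%N.
  rewrite cardsD; have -> : A :&: Y = Y by apply/setIidPr.
  move: c2' hA; clear; move: #|_| #|_| => p q; lia.
have [D [R [DA hDe cD hR hRd]]] := IH (A :\: Y) e e0 (closedD hAe hYe) hA'.
have DY : [disjoint D & Y].
  apply: disjP => x /(subsetP DA); by rewrite inE => /andP [].
pose R' j := if j == c then Y else R j.
exists (Y :|: D), R'; split.
- by rewrite subUset YA (subset_trans DA) // subsetDl.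
- exact: closedU.
- rewrite cardsU; move: c2' cD; clear; move: #|_| #|_| #|_| => p q r; lia.
- move=> j hj; rewrite /R'.
  case: eqP => [_|n1]; first by split; [rewrite subsetUl | exact: sum_pair].
  have [h1 h2] : R j \subset D /\ \sum_(x in R j) x = e by apply: hR; move: hj n1; clear; lia.
  split=> //; by rewrite (subset_trans h1) ?subsetUr.
- move=> j j' hj hj' jj; apply: (disj_cases1 (Y := Y)) => //.
  move=> k hk; have [h1 _] := hR k hk; exact: disjointWl h1 DY.
Qed.

Definition Vclosed n (V F : {set 'cV['F_2]_n}) := forall x, x \in V -> closedby F x.

Lemma take_cosets n (V : {set 'cV['F_2]_n}) (V0 : 0 \in V)
  (Vadd : forall x y, x \in V -> y \in V -> x + y \in V) k :
  forall F, Vclosed V F -> (k * #|V| <= #|F|)%N ->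
  exists A : {set 'cV['F_2]_n}, [/\ A \subset F, Vclosed V A & #|A| = (k * #|V|)%N].
Proof.
elim: k => [|k IH] F hF hk.
  exists set0; split; [by rewrite sub0set | by move=> ? ? ?; rewrite inE | by rewrite cards0].
have [A [AF hA cA]] : exists A : {set 'cV['F_2]_n}, [/\ A \subset F, Vclosed V A & #|A| = (k * #|V|)%N].
  apply: IH => //; move: hk; clear; move: #|_| #|_| => p q; lia.
have hFA : Vclosed V (F :\: A) by move=> x xV; apply: closedD; [exact: hF | exact: hA].
have cFA : #|F :\: A| = (#|F| - #|A|)%N.
  rewrite cardsD; by have -> : F :&: A = A by apply/setIidPr.
have Vpos : (0 < #|V|)%N by apply/card_gt0P; exists 0.
have : (0 < #|F :\: A|)%N.
  rewrite cFA cA; move: hk Vpos; clear; move: #|_| #|_| => p q; lia.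
case/card_gt0P => x xFA.
set C := [set x + w | w in V].
have CFA : C \subset F :\: A.
  apply/subsetP => z /imsetP [w wV ->]; exact: hFA w wV x xFA.
have cC : #|C| = #|V|.
  by apply: card_imset; apply: addrI.
have hC : Vclosed V C.
  move=> w wV z /imsetP [w' w'V ->]; rewrite -addrA.
  by apply: imset_f; apply: Vadd.
exists (A :|: C); split.
- by rewrite subUset AF (subset_trans CFA) // subsetDl.
- move=> w wV; apply: closedU; [exact: hA | exact: hC].
- rewrite cardsU.
  have -> : A :&: C = set0.
    apply/setP => z; rewrite !inE; apply/negP => /andP [zA /(subsetP CFA)].
    by rewrite inE zA.
  rewrite cards0 cA cC; move: #|V| => p; clear; lia.
Qed.


Definition pairstep n (V : {set 'cV['F_2]_n}) :=
 forall (F : {set 'cV['F_2]_n}) (u w : 'cV['F_2]_n) (a b : nat), Vclosed V F ->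
   u \in V -> w \in V -> u != 0 -> w != 0 ->
   (2 * (a + b) + #|V| <= #|F|)%N ->
   exists (A : {set 'cV['F_2]_n}) (Ru Rw : nat -> {set 'cV['F_2]_n}),
    [/\ A \subset F, Vclosed V A, (#|A| <= 2 * (a + b) + #|V|)%N,
       (forall j, (j < a)%N -> Ru j \subset A /\ \sum_(x in Ru j) x = u) /\
       (forall j, (j < b)%N -> Rw j \subset A /\ \sum_(x in Rw j) x = w) &
       (forall j j', (j < a)%N -> (j' < a)%N -> j != j' -> [disjoint Ru j & Ru j']) /\
       (forall j j', (j < b)%N -> (j' < b)%N -> j != j' -> [disjoint Rw j & Rw j']) /\
       (forall j j', (j < a)%N -> (j' < b)%N -> [disjoint Ru j & Rw j'])].

Lemma closed0 n (F : {set 'cV['F_2]_n}) : closedby F 0.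
Proof. by move=> y; rewrite addr0. Qed.

Lemma pairstep1 n (u0 : 'cV['F_2]_n) : u0 != 0 -> pairstep [set 0; u0].
Proof.
move=> u00 F u w a b hF uV wV u0' w0' hc.
have eu : u = u0 by move: uV u0'; rewrite !inE => /orP [] /eqP -> //; rewrite eqxx.
have ew : w = u0 by move: wV w0'; rewrite !inE => /orP [] /eqP -> //; rewrite eqxx.
subst u w.
have u0V : u0 \in [set 0; u0] by rewrite !inE eqxx orbT.
have [D1 [R1 [D1F hD1 cD1 hR1 dR1]]] := serve_pairs (c := a) u00 (hF u0 u0V) ltac:(move: hc; clear; move: #|_| #|_| => p q; lia).
have cF1 : #|F :\: D1| = (#|F| - #|D1|)%N.
  rewrite cardsD; by have -> : F :&: D1 = D1 by apply/setIidPr.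
have [D2 [R2 [D2F hD2 cD2 hR2 dR2]]] := serve_pairs (c := b) u00 (closedD (hF u0 u0V) hD1)
   ltac:(rewrite cF1; move: hc cD1; clear; move: #|_| #|_| #|_| => p q r; lia).
exists (D1 :|: D2), R1, R2; split.
- by rewrite subUset D1F (subset_trans D2F) // subsetDl.
- move=> x; rewrite !inE => /orP [] /eqP ->; [exact: closed0 | exact: closedU].
- rewrite cardsU; move: cD1 cD2; clear; move: #|_| #|_| #|_| #|_| => p q r o; lia.
- split=> j hj.
  + have [h1 h2] := hR1 j hj; by rewrite (subset_trans h1) ?subsetUl.
  + have [h1 h2] := hR2 j hj; by rewrite (subset_trans h1) ?subsetUr.
- split=> //; split=> // j j' hj hj'.
  have [h1 _] := hR1 j hj; have [h2 _] := hR2 j' hj'.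
  apply: disjP => x /(subsetP h1) xD1; apply/negP => /(subsetP h2) /(subsetP D2F).
  by rewrite inE xD1.
Qed.


Lemma pairstep4 n (V : {set 'cV['F_2]_n}) q (V0 : 0 \in V)
  (Vadd : forall x y, x \in V -> y \in V -> x + y \in V) :
  #|V| = (4 * q)%N -> (0 < q)%N -> pairstep V.
Proof.
move=> cV q0 F u w a b hF uV wV u0 w0 hc.
have [z [f [zV fV z0 uz [f0 wf hwf]]]] : exists z f, [/\ z \in V, f \in V, z != 0, u != z &
   [/\ f != 0, w != f & ((w == u) && (f == z)) || ((w == z) && (f == u))]].
  case: (eqVneq w u) => [ewu|nwu].
    have : (0 < #|V :\: [set (0%R : 'cV['F_2]_n); u]|)%N.
      rewrite cardsD; have -> : V :&: [set (0%R : 'cV['F_2]_n); u] = [set (0%R : 'cV['F_2]_n); u].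
        apply/setIidPr; apply/subsetP => x; rewrite !inE => /orP [] /eqP -> //.
      rewrite cards2 cV; move: q0; clear; case: (_ != _); lia.
    case/card_gt0P => z; rewrite !inE negb_or => /andP [/andP [z0 zu] zV].
    exists z, z; split=> //; first by rewrite eq_sym.
    split=> //; first by rewrite ewu eq_sym. by rewrite ewu !eqxx.
  exists w, u; split=> //; first by rewrite eq_sym.
  split=> //; by rewrite !eqxx orbT.
pose ma := (a.+1 %/ 2)%N; pose mb := (b.+1 %/ 2)%N.
have hma : (a <= 2 * ma <= a.+1)%N by rewrite /ma; clear; lia.
have hmb : (b <= 2 * mb <= b.+1)%N by rewrite /mb; clear; lia.
pose k := ((ma + mb + q.-1) %/ q)%N.
have hk : (ma + mb <= k * q <= ma + mb + q.-1)%N.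
  have := divn_eq (ma + mb + q.-1) q; have := ltn_pmod (ma + mb + q.-1) q0.
  rewrite -/k; move: q0; clear; move: (k * q)%N ((ma + mb + q.-1) %% q)%N => K r; lia.
clearbody k ma mb.
have hkF : (k * #|V| <= #|F|)%N.
  rewrite cV mulnCA; move: hk hma hmb hc q0; rewrite cV; clear.
  move: (k * q)%N #|F| => K p; lia.
have [A [AF hA cA]] := take_cosets V0 Vadd (k := k) hF hkF.
have zA := hA z zV; have uA := hA u uV; have wA := hA w wV; have fA := hA f fV.
have [D1 [R1 [D1A hD1u hD1z cD1 [hR1 dR1]]]] := serve_even (m := ma) u0 z0 uz uA zA
   ltac:(rewrite cA cV mulnCA; move: hk hma hmb; clear; move: (k * q)%N => K; lia).
have cA1 : #|A :\: D1| = (#|A| - #|D1|)%N.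
  rewrite cardsD; by have -> : A :&: D1 = D1 by apply/setIidPr.
have [hD1w hD1f] : closedby D1 w /\ closedby D1 f.
  by case/orP: hwf => /andP [/eqP -> /eqP ->].
have [D2 [R2 [D2A hD2w hD2f cD2 [hR2 dR2]]]] := serve_even (m := mb) w0 f0 wf
   (closedD wA hD1w) (closedD fA hD1f)
   ltac:(rewrite cA1 cA cV mulnCA; move: hk hma hmb cD1; clear; move: (k * q)%N #|D1| => K p; lia).
exists A, R1, R2; split=> //.
- rewrite cA cV mulnCA; move: hk hma hmb q0; clear; move: (k * q)%N => K; lia.
- split=> j hj.
  + have [h1 h2] := hR1 j ltac:(move: hj hma; clear; lia); by rewrite (subset_trans h1).
  + have [h1 h2] := hR2 j ltac:(move: hj hmb; clear; lia); split=> //.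
    by rewrite (subset_trans h1) // (subset_trans D2A) // subsetDl.
- split; [|split].
  + move=> j j' hj hj' jj; apply: dR1 => //; move: hj hj' hma; clear; lia.
  + move=> j j' hj hj' jj; apply: dR2 => //; move: hj hj' hmb; clear; lia.
  + move=> j j' hj hj'.
    have [h1 _] := hR1 j ltac:(move: hj hma; clear; lia).
    have [h2 _] := hR2 j' ltac:(move: hj' hmb; clear; lia).
    apply: disjP => x /(subsetP h1) xD1; apply/negP => /(subsetP h2) /(subsetP D2A).
    by rewrite inE xD1.
Qed.


Definition lserve n (F : {set 'cV['F_2]_n}) (rs : seq ('cV['F_2]_n * nat))
   (R : nat -> nat -> {set 'cV['F_2]_n}) :=
 (forall i j, (i < size rs)%N -> (j < (nth (0%R : 'cV['F_2]_n, 0%N) rs i).2)%N ->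
     R i j \subset F /\ \sum_(x in R i j) x = (nth (0%R : 'cV['F_2]_n, 0%N) rs i).1) /\
 (forall i j i' j', (i < size rs)%N -> (i' < size rs)%N ->
     (j < (nth (0%R : 'cV['F_2]_n, 0%N) rs i).2)%N -> (j' < (nth (0%R : 'cV['F_2]_n, 0%N) rs i').2)%N ->
     (i != i') || (j != j') -> [disjoint R i j & R i' j']).

Lemma lserve_cat n (F : {set 'cV['F_2]_n}) rs rs' R :
  lserve F (rs ++ rs') R -> lserve F rs R.
Proof.
case=> h1 h2; split.
- move=> i j hi; have := h1 i j; rewrite size_cat nth_cat hi; apply; lia.
- move=> i j i' j' hi hi'; have := h2 i j i' j'; rewrite size_cat !nth_cat hi hi'; apply; lia.
Qed.

Lemma disjAD (T : finType) (A F S S' : {set T}) :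
  S \subset A -> S' \subset F :\: A -> [disjoint S & S'].
Proof.
move=> h h'; apply: disjP => x /(subsetP h) xA; apply/negP => /(subsetP h').
by rewrite inE xA.
Qed.

Lemma combine n (F A : {set 'cV['F_2]_n}) (u : 'cV['F_2]_n) a (w : 'cV['F_2]_n) b rest (Ru Rw : nat -> {set 'cV['F_2]_n}) (R : nat -> nat -> {set 'cV['F_2]_n}) :
  A \subset F ->
  (forall j, (j < a)%N -> Ru j \subset A /\ \sum_(x in Ru j) x = u) ->
  (forall j, (j < b)%N -> Rw j \subset A /\ \sum_(x in Rw j) x = w) ->
  (forall j j', (j < a)%N -> (j' < a)%N -> j != j' -> [disjoint Ru j & Ru j']) ->
  (forall j j', (j < b)%N -> (j' < b)%N -> j != j' -> [disjoint Rw j & Rw j']) ->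
  (forall j j', (j < a)%N -> (j' < b)%N -> [disjoint Ru j & Rw j']) ->
  lserve (F :\: A) rest R ->
  lserve F ((u, a) :: (w, b) :: rest)
    (fun i j => match i with 0 => Ru j | 1 => Rw j | i'.+2 => R i' j end).
Proof.
move=> AF hRu hRw dRu dRw dRuw [hR dR].
have sub1 : forall i j, (i < size rest)%N -> (j < (nth (0%R : 'cV['F_2]_n, 0%N) rest i).2)%N -> R i j \subset F :\: A.
  by move=> i j hi hj; have [] := hR i j hi hj.
split.
- case=> [|[|i]] j /= hi hj.
  + by have [h1 h2] := hRu j hj; rewrite (subset_trans h1).
  + by have [h1 h2] := hRw j hj; rewrite (subset_trans h1).
  + have [h1 h2] := hR i j ltac:(lia) hj; split=> //.
    by rewrite (subset_trans h1) // subsetDl.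
- case=> [|[|i]] j; case=> [|[|i']] j' /= hi hi' hj hj' hne.
  + by apply: dRu.
  + exact: dRuw.
  + have [h1 _] := hRu j hj; exact: disjAD h1 (sub1 i' j' ltac:(lia) hj').
  + by rewrite disjoint_sym; apply: dRuw.
  + by apply: dRw.
  + have [h1 _] := hRw j hj; exact: disjAD h1 (sub1 i' j' ltac:(lia) hj').
  + have [h1 _] := hRu j' hj'; rewrite disjoint_sym; exact: disjAD h1 (sub1 i j ltac:(lia) hj).
  + have [h1 _] := hRw j' hj'; rewrite disjoint_sym; exact: disjAD h1 (sub1 i j ltac:(lia) hj).
  + by apply: dR => //; lia.
Qed.


Lemma core n (V : {set 'cV['F_2]_n}) (hV : pairstep V) k :
  forall (rs : seq ('cV['F_2]_n * nat)) (F : {set 'cV['F_2]_n}),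
  (size rs <= k)%N -> Vclosed V F ->
  all (fun p => (p.1 \in V) && (p.1 != 0)) rs ->
  (2 * (\sum_(p <- rs) p.2) + ((size rs).+1 %/ 2) * #|V| <= #|F|)%N ->
  exists R, lserve F rs R.
Proof.
elim: k => [|k IH] rs F.
  case: rs => // _ _ _ _; exists (fun _ _ => set0); split=> //.
case: rs => [|[u a] [|[w b] rest]] hs hF hall hc.
- by exists (fun _ _ => set0); split.
- move: hall => /= /andP [/andP [uV u0] _].
  move: hc; rewrite big_cons big_nil /= => hc.
  have hc' : (2 * (a + 0) + #|V| <= #|F|)%N.
    move: hc; rewrite (_ : (2 %/ 2 = 1)%N) // mul1n; clear; move: #|_| #|_| => p q; lia.
  have [A [Ru [Rw [AF hA cA [hRu hRw] [dRu [dRw dRuw]]]]]] :=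
    hV F u u a 0%N hF uV uV u0 u0 hc'.
  have L0 : lserve (F :\: A) [::] (fun _ _ => set0) by split.
  have L := combine AF hRu hRw dRu dRw dRuw L0.
  exists (fun i j => match i with 0 => Ru j | 1 => Rw j | i'.+2 => set0 end).
  apply: (lserve_cat (rs := [:: (u, a)]) (rs' := [:: (u, 0%N)])); exact: L.
- move: hall => /= /andP [/andP [uV u0] /andP [/andP [wV w0] hall]].
  move: hc; rewrite !big_cons /=.
  have -> : ((size rest).+3 %/ 2 = ((size rest).+1 %/ 2).+1)%N by lia.
  rewrite (mulSn ((size rest).+1 %/ 2)) => hc.
  have hc' : (2 * (a + b) + #|V| <= #|F|)%N.
    move: hc; clear; move: (((size rest).+1 %/ 2) * #|V|)%N (\sum_(_ <- rest) _)%N #|_| #|_| => cP S p q; nia.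
  have [A [Ru [Rw [AF hA cA [hRu hRw] [dRu [dRw dRuw]]]]]] :=
    hV F u w a b hF uV wV u0 w0 hc'.
  have hFA : Vclosed V (F :\: A) by move=> x xV; apply: closedD; [exact: hF | exact: hA].
  have cFA : #|F :\: A| = (#|F| - #|A|)%N.
    rewrite cardsD; by have -> : F :&: A = A by apply/setIidPr.
  have [R hR] := IH rest (F :\: A) ltac:(move: hs; clear; simpl; lia) hFA hall
    ltac:(rewrite cFA; move: hc cA; clear; move: (((size rest).+1 %/ 2) * #|V|)%N (\sum_(_ <- rest) _)%N #|_| #|_| #|_| => cP S p q r; nia).
  eexists; exact: combine AF hRu hRw dRu dRw dRuw hR.
Qed.


Lemma sum_pre n N (G : 'M['F_2]_(n, N)) (S : {set 'cV['F_2]_n}) :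
  simplex_generator G ->
  \sum_(l in [set l | col l G \in S]) col l G = \sum_(x in S) x.
Proof.
case=> hnz hinj hsurj.
rewrite -(big_imset (fun x => x) (h := fun l => col l G)); last by move=> l l' _ _; apply: hinj.
have -> : [set col l G | l in [set l | col l G \in S]] = S :\ 0.
  apply/setP => x; rewrite !inE; apply/imsetP/andP.
  - case=> l; rewrite inE => lS ->; by rewrite hnz.
  - case=> x0 xS; have [l hl] := hsurj x x0; exists l => //; by rewrite inE hl.
case: (boolP (0 \in S)) => S0; first by rewrite [RHS](big_setD1 _ S0) /= add0r.
apply: eq_bigl => x; rewrite !inE.
case: (eqVneq x 0) => [->|] //=; by rewrite (negbTE S0).
Qed.


Lemma exp2_le r : (2 ^ r <= 2 * 2 ^ (r - 1))%N.
Proof. case: r => [|r] //; by rewrite -expnS subn1. Qed.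

Lemma main2 n N (G : 'M['F_2]_(n, N)) : (1 <= n)%N -> simplex_generator G ->
  forall s (v : 'I_s -> 'cV['F_2]_n) (a : 'I_s -> nat) (t : nat), (1 <= s)%N ->
  (forall i, v i != 0) -> (forall i, (0 < a i)%N) -> (\sum_(i < s) a i)%N = t ->
  (t <= 2 ^ (n - 1) - (s.+1)./2 * 2 ^ (span_dim v - 1))%N -> serves G v a.
Proof.
move=> n1 hG s v a t s1 hv ha ht hle.
pose M := \matrix_(i < s, k < n) v i k ord0.
have rE : span_dim v = \rank M by [].
rewrite rE in hle.
move: hle; set r := \rank M => hle.
pose B := row_base M.
pose V := [set (c *m B)^T | c : 'rV['F_2]_r].
have V0 : 0 \in V by apply/imsetP; exists 0 => //; rewrite mul0mx trmx0.
have Vadd : forall x y, x \in V -> y \in V -> x + y \in V.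
  move=> x y /imsetP [c _ ->] /imsetP [d _ ->]; apply/imsetP; exists (c + d) => //.
  by rewrite mulmxDl linearD.
have cV : #|V| = (2 ^ r)%N.
  rewrite card_imset ?card_mx ?card_Fp //= ?mul1n //.
  by move=> c d /trmx_inj /(row_free_inj (row_base_free M)).
have vV : forall i, v i \in V.
  move=> i; have : (row i M <= B)%MS by rewrite eq_row_base row_sub.
  case/submxP => D hD; apply/imsetP; exists D => //; rewrite -hD.
  by apply/matrixP => k l; rewrite !mxE (ord1 l).
pose i0 : 'I_s := Ordinal s1.
have hV : pairstep V.
  case: (leqP 2 r) => hr.
    apply: (@pairstep4 _ _ (2 ^ (r - 2))) => //; last by rewrite expn_gt0.
    by rewrite cV -{1}(subnKC hr) expnD.
  have VE : V = [set 0; v i0].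
    apply/eqP; rewrite eq_sym eqEcard; apply/andP; split.
      by apply/subsetP => x; rewrite !inE => /orP [] /eqP ->.
    rewrite cards2 eq_sym (hv i0) cV; move: hr; clear; case: r => [|[|]] //.
  rewrite VE; exact: pairstep1.
pose rs := [seq (v i, a i) | i <- enum 'I_s].
have nthE : forall i : 'I_s, nth (0%R : 'cV['F_2]_n, 0%N) rs i = (v i, a i).
  by move=> i; rewrite (nth_map i) ?size_enum_ord ?nth_ord_enum.
have srs : size rs = s by rewrite size_map size_enum_ord.
have hall : all (fun p => (p.1 \in V) && (p.1 != 0)) rs.
  by apply/allP => p /mapP [i _ ->] /=; rewrite vV hv.
have hsum : (\sum_(p <- rs) p.2)%N = t by rewrite big_map big_enum /=.
have t1 : (1 <= t)%N.
  by rewrite -ht (bigD1 i0) //=; move: (ha i0); clear; move: (a i0) (\sum_(i < s | i != i0) a i)%N => x y; lia.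
have hcount : (2 * (\sum_(p <- rs) p.2) + ((size rs).+1 %/ 2) * #|V| <= #|[set: 'cV['F_2]_n]|)%N.
  rewrite hsum srs cV cardsT card_mx card_Fp // muln1 divn2.
  have e1 : (2 ^ n = 2 * 2 ^ (n - 1))%N by rewrite -expnS subn1 prednK.
  have h2 : ((s.+1)./2 * 2 ^ r <= 2 * ((s.+1)./2 * 2 ^ (r - 1)))%N.
    by rewrite mulnCA leq_mul2l exp2_le orbT.
  rewrite e1; move: h2 hle t1; clear.
  move: ((s.+1)./2 * 2 ^ r)%N ((s.+1)./2 * 2 ^ (r - 1))%N (2 ^ (n - 1))%N => x y z; lia.
have [R [hR dR]] := core hV (leqnn (size rs)) (fun x _ y _ => in_setT (y + x)) hall hcount.
exists (fun i j => [set l | col l G \in R (val i) j]); split.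
- move=> i i' j j' hj hj' hne.
  have hd : [disjoint R i j & R i' j'].
    apply: dR; rewrite ?srs ?nthE //.
    move: hne; rewrite xpair_eqE negb_and; case/orP => h; apply/orP; [left|right] => //.
  apply: disjP => l; rewrite !inE => h1; by rewrite (disjointFr hd h1).
- move=> i j hj; rewrite sum_pre //.
  have := hR i j; rewrite srs nthE /=; case=> //.
Qed.


Local Close Scope ring_scope.

Theorem mainTheorem11 (n : nat) (G : 'M['F_2]_(n, 2 ^ n - 1)) :
  1 <= n -> simplex_generator G ->
  forall s : nat, 1 <= s -> le_n_minus_ln_n s n ->
    functional_batch G s (2 ^ (n - 1) - (s.+1)./2 * 2 ^ (s - 1)) /\
    (forall (v : 'I_s -> 'cV['F_2]_n) (a : 'I_s -> nat) (t : nat),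
        (forall i, v i != 0%R) -> (forall i, 0 < a i) ->
        \sum_(i < s) a i = t ->
        t <= 2 ^ (n - 1) - (s.+1)./2 * 2 ^ (span_dim v - 1) ->
        serves G v a).
Proof.
move=> n1 hG s s1 _; split.
- move=> v a hv ha ht; have := main2 n1 hG s1 hv ha ht; apply.
  apply: leq_sub2l; apply: leq_mul => //; apply: leq_pexp2l => //.
  apply: leq_sub2r; exact: rank_leq_row.
- move=> v a t hv ha ht hle; have := main2 n1 hG s1 hv ha ht hle; apply.
Qed.
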